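(* Let $q(t)=t^2\log(t^2)$ for $t>0$ and, for an integer $k\ge2$, let $p^{2k-1}_{\mathrm{Tay}}$ be the Taylor polynomial of $q$ of order $2k-1$ about $t=1$. Then $p^{2k-1}_{\mathrm{Tay}}(t)\ge q(t)$ for all $t>0$. *)

(* Defs.v *)
From Stdlib Require Import Reals Factorial.
From Coquelicot Require Import Coquelicot.
Open Scope R_scope.

Definition q (t : R) : R := t ^ 2 * ln (t ^ 2).

(* Taylor polynomial of order n of f about a:
   sum_{j=0}^{n} f^{(j)}(a)/j! (t-a)^j.  (sum_f_R0 g n = g 0 + ... + g n) *)
Definition taylor_poly (f : R -> R) (a : R) (n : nat) (t : R) : R :=
  sum_f_R0 (fun j => Derive_n f j a / INR (fact j) * (t - a) ^ j) n.

(* Main.v *)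
Require Import Defs.
From Stdlib Require Import Reals Factorial Lra Lia Psatz.
From Coquelicot Require Import Coquelicot.
Open Scope R_scope.

Definition g (j : nat) (x : R) : R :=
  match j with
  | O => x ^ 2 * ln (x ^ 2)
  | 1%nat => 2 * x * ln (x ^ 2) + 2 * x
  | 2%nat => 2 * ln (x ^ 2) + 6
  | S (S (S n)) => 4 * (-1) ^ n * INR (fact n) / x ^ (S n)
  end.

Lemma g_der (j : nat) (x : R) : x <> 0 -> is_derive (g j) x (g (S j) x).
Proof.
  intros Hx.
  assert (H2 : 0 < x ^ 2) by (apply pow2_gt_0; auto).
  assert (H2' : 0 < x * (x * 1)) by (simpl in H2; exact H2).
  destruct j as [|[|[|n]]].
  - change (is_derive (fun x => x ^ 2 * ln (x ^ 2)) x (2 * x * ln (x ^ 2) + 2 * x)).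
    auto_derive; [lra|]. simpl. field; auto.
  - change (is_derive (fun x => 2 * x * ln (x ^ 2) + 2 * x) x (2 * ln (x ^ 2) + 6)).
    auto_derive; [lra|]. simpl. field; auto.
  - change (is_derive (fun x => 2 * ln (x ^ 2) + 6) x (4 * (-1) ^ 0 * INR (fact 0) / x ^ 1)).
    auto_derive; [lra|]. simpl. field; auto.
  - change (is_derive (fun x => 4 * (-1) ^ n * INR (fact n) / x ^ (S n)) x
       (4 * (-1) ^ (S n) * INR (fact (S n)) / x ^ (S (S n)))).
    auto_derive; [apply Rmult_integral_contrapositive_currified; [auto|apply pow_nonzero; auto]|].
    simpl fact. rewrite plus_INR, mult_INR. simpl pow. change (match n with 0%nat => 1 | S _ => INR n + 1 end) with (INR (S n)). rewrite S_INR. field. split; [apply pow_nonzero; auto|auto].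
Qed.

Lemma loc_nz (x : R) : x <> 0 -> locally x (fun y => y <> 0).
Proof.
  intros Hx. assert (Hp : 0 < Rabs x) by (apply Rabs_pos_lt; auto).
  exists (mkposreal _ Hp). intros y Hy Hy0. subst y.
  unfold ball in Hy; simpl in Hy; unfold AbsRing_ball, abs, minus, plus, opp in Hy; simpl in Hy.
  rewrite Rplus_0_l, Rabs_Ropp in Hy. lra.
Qed.

Lemma Dn_q (j : nat) : forall x, x <> 0 -> Derive_n q j x = g j x.
Proof.
  induction j as [|j IH]; intros x Hx.
  - reflexivity.
  - simpl. rewrite (Derive_ext_loc _ (g j)).
    + apply is_derive_unique, g_der; auto.
    + apply (filter_imp (fun y => y <> 0)); [|apply loc_nz; auto]. intros y Hy. apply IH; auto.
Qed.

Lemma exDn_q (j : nat) (x : R) : x <> 0 -> ex_derive_n q j x.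
Proof.
  intros Hx. destruct j as [|j]; [exact I|]. simpl.
  apply (ex_derive_ext_loc (g j)).
  - apply (filter_imp (fun y => y <> 0)); [|apply loc_nz; auto]. intros y Hy. symmetry; apply Dn_q; auto.
  - eexists; apply g_der; auto.
Qed.

Lemma g_neg (m : nat) : g m (-1) = (-1) ^ m * g m 1.
Proof.
  destruct m as [|[|[|n]]]; simpl g; simpl pow; try (rewrite ?Rmult_1_r; replace (-1 * -1) with 1 by ring; rewrite ln_1; ring).
  rewrite pow1. assert (E : (-1) ^ n * (-1) ^ n = 1).
  { rewrite <- Rpow_mult_distr. replace (-1 * -1) with 1 by ring. apply pow1. }
  assert (Hn : (-1) ^ n <> 0) by (apply pow_nonzero; lra).
  transitivity (- (4 * INR (fact n))); [field; auto|].
  transitivity (- (4 * INR (fact n)) * ((-1) ^ n * (-1) ^ n)); [rewrite E; ring|field].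
Qed.

Lemma m1sq (m : nat) : (-1) ^ m * (-1) ^ m = 1.
Proof. rewrite <- Rpow_mult_distr. replace (-1 * -1) with 1 by ring. apply pow1. Qed.

Lemma rem_neg (m : nat) (z d : R) : z <> 0 ->
  d ^ (S (S (S (S (2 * m))))) / INR (fact (S (S (S (S (2 * m)))))) *
  g (S (S (S (S (2 * m))))) z <= 0.
Proof.
  intros Hz. change (g (S(S(S(S(2*m))))) z) with (4 * (-1)^(S(2*m)) * INR (fact (S(2*m))) / z^(S(S(2*m)))).
  assert (Hd : 0 <= d ^ (S (S (S (S (2 * m)))))).
  { replace (S (S (S (S (2 * m))))) with (2 * S (S m))%nat by lia.
    rewrite pow_mult. apply pow_le, pow2_ge_0. }
  assert (Hf : 0 < INR (fact (S (S (S (S (2 * m))))))) by (apply lt_0_INR, lt_O_fact).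
  assert (Hf2 : 0 < INR (fact (S (2 * m)))) by (apply lt_0_INR, lt_O_fact).
  assert (Hz2 : 0 < z ^ (S (S (2 * m)))).
  { replace (S (S (2 * m))) with (2 * S m)%nat by lia. rewrite pow_mult.
    apply pow_lt. apply pow2_gt_0; auto. }
  assert (Hs : (-1) ^ (S (2 * m)) = -1).
  { apply pow_1_odd. }
  rewrite Hs.
  assert (0 < 4 * INR (fact (S (2 * m))) / z ^ S (S (2 * m))).
  { apply Rdiv_lt_0_compat; lra. }
  assert (0 <= d ^ S (S (S (S (2 * m)))) / INR (fact (S (S (S (S (2 * m))))))).
  { apply Rdiv_le_0_compat; lra. }
  replace (4 * -1 * INR (fact (S (2 * m))) / z ^ S (S (2 * m))) with
    (- (4 * INR (fact (S (2 * m))) / z ^ S (S (2 * m)))) by (field; lra).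
  nra.
Qed.

Lemma sum_at1 (a : nat -> R) (N : nat) : sum_f_R0 (fun j => a j * (1 - 1) ^ j) N = a 0%nat.
Proof.
  induction N as [|N IH]; simpl.
  - ring.
  - rewrite IH. replace (1 - 1) with 0 by ring. ring.
Qed.

Theorem mainTheorem11 (k : nat) (hk : (2 <= k)%nat) (t : R) (ht : 0 < t) :
  taylor_poly q 1 (2 * k - 1) t >= q t.
Proof.
  destruct k as [|[|m]]; [lia|lia|].
  replace (2 * S (S m) - 1)%nat with (S (S (S (2 * m)))) by lia.
  set (N := S (S (S (2 * m)))).
  unfold taylor_poly.
  destruct (Rtotal_order t 1) as [Hlt|[Heq|Hgt]].
  - destruct (Taylor_Lagrange q N (-1) (-t)) as [z [Hz E]]; [lra| |].
    { intros s Hs j _. apply exDn_q. lra. }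
    assert (Hq : q (-t) = q t) by (unfold q; replace ((-t)^2) with (t^2) by ring; reflexivity).
    rewrite Hq in E.
    assert (Hr := rem_neg m z (- t - -1) ltac:(lra)).
    assert (HS : sum_f_R0 (fun m0 => (- t - -1) ^ m0 / INR (fact m0) * Derive_n q m0 (-1)) N =
                sum_f_R0 (fun j => Derive_n q j 1 / INR (fact j) * (t - 1) ^ j) N).
    { apply sum_eq. intros i _. rewrite !Dn_q by lra. rewrite g_neg.
      replace (- t - -1) with (-1 * (t - 1)) by ring. rewrite Rpow_mult_distr.
      assert (Hm := m1sq i).
      assert (Hfi : INR (fact i) <> 0) by (apply INR_fact_neq_0).

      transitivity ((t-1)^i * g i 1 * ((-1)^i * (-1)^i) / INR (fact i)); [field; auto|].
      rewrite Hm. field; auto. }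
    rewrite HS in E. rewrite (Dn_q (S N) z) in E by lra. unfold N in *. lra.
  - subst t. rewrite sum_at1. simpl. lra.
  - destruct (Taylor_Lagrange q N 1 t) as [z [Hz E]]; [lra| |].
    { intros s Hs j _. apply exDn_q. lra. }
    assert (Hr := rem_neg m z (t - 1) ltac:(lra)).
    assert (HS : sum_f_R0 (fun m0 => (t - 1) ^ m0 / INR (fact m0) * Derive_n q m0 1) N =
                sum_f_R0 (fun j => Derive_n q j 1 / INR (fact j) * (t - 1) ^ j) N).
    { apply sum_eq. intros i _. field. apply INR_fact_neq_0. }
    rewrite HS in E. rewrite (Dn_q (S N) z) in E by lra. unfold N in *. lra.
Qed.
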